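(* Let $\rho$, $\bar\rho$, $\sigma$ be non-negative operators on a finite-dimensional Hilbert space, and suppose $\bar\rho\le\lambda\sigma$ for some $\lambda>0$. Then for every $\epsilon\in(0,\mathrm{tr}(\rho)]$, $$D_H^\epsilon(\rho\|\sigma)\le\log_2(\lambda)-\log_2\bigl(1-\Delta(\rho,\bar\rho)/\epsilon\bigr).$$
   Context: For non-negative operators $\rho,\sigma$ and $\epsilon\in(0,\mathrm{tr}(\rho)]$, the generalised relative entropy is defined by $2^{-D_H^\epsilon(\rho\|\sigma)}=\inf\{\mathrm{tr}(Q\sigma)/\epsilon:\ 0\le Q\le \mathrm{id},\ \mathrm{tr}(Q\rho)\ge\epsilon\}$ (with value $\infty$ if the infimum is $0$). The (generalised) trace distance of non-negative operators is $\Delta(\rho,\sigma)=\frac12\|\rho-\sigma\|_1+\frac12|\mathrm{tr}(\rho-\sigma)|$. *)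

(* Defs.v *)
From mathcomp Require Import all_boot all_order all_algebra spectral.
From mathcomp Require Import complex.
From mathcomp Require Import boolp classical_sets reals constructive_ereal exp.

Set Implicit Arguments.
Unset Strict Implicit.
Unset Printing Implicit Defensive.

Import Order.TTheory GRing.Theory Num.Theory.
Local Open Scope ring_scope.
Local Open Scope complex_scope.

Section QDefs.
Variable R : realType.
Local Notation C := R[i].

Definition adj {m n} (A : 'M[C]_(m, n)) : 'M[C]_(n, m) := (map_mx Num.conj A)^T.

Definition psd {n} (A : 'M[C]_n) : Prop :=
  adj A = A /\ forall v : 'cV[C]_n, 0 <= (adj v *m A *m v) 0 0.

Definition loewner_le {n} (A B : 'M[C]_n) : Prop := psd (B - A).

Definition absmx {n} (X : 'M[C]_n) : 'M[C]_n :=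
  match pselect (exists M : 'M[C]_n, psd M /\ M *m M = adj X *m X) with
  | left h => projT1 (cid h)
  | right _ => 0
  end.

Definition trnorm {n} (X : 'M[C]_n) : R := complex.Re (\tr (absmx X)).

Definition gtd {n} (rho sigma : 'M[C]_n) : R :=
  trnorm (rho - sigma) / 2 + complex.Re `|\tr (rho - sigma)| / 2.

Definition log2 (x : R) : R := ln x / ln 2.

Definition DH_set {n} (eps : R) (rho sigma : 'M[C]_n) : set R :=
  [set r | exists Q : 'M[C]_n,
     [/\ psd Q, loewner_le Q 1%:M, eps%:C <= \tr (Q *m rho)
       & r = complex.Re (\tr (Q *m sigma)) / eps]].

Definition DH {n} (eps : R) (rho sigma : 'M[C]_n) : \bar R :=
  let t := inf (DH_set eps rho sigma) in
  if t == 0 then +oo%E else (- log2 t)%:E.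

Definition rhs_bound (lambda x : R) : \bar R :=
  if 1 - x <= 0 then +oo%E else (log2 lambda - log2 (1 - x))%:E.

End QDefs.

(* Main.v *)
Require Import Defs.
From mathcomp Require Import all_boot all_order all_algebra spectral sesquilinear.
From mathcomp Require Import complex ring lra.
From mathcomp Require Import boolp classical_sets reals constructive_ereal exp.
Import Order.TTheory GRing.Theory Num.Theory.
Local Open Scope ring_scope.
Local Open Scope complex_scope.
Set Implicit Arguments. Unset Strict Implicit.
Section S.
Variable R : realType.
Local Notation C := R[i].
Lemma adjM m n p (A : 'M[C]_(m,n)) (B : 'M[C]_(n,p)) : adj (A *m B) = adj B *m adj A.
Proof. by rewrite /adj map_mxM trmx_mul. Qed.
Lemma adjK m n (A : 'M[C]_(m,n)) : adj (adj A) = A.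
Proof. by apply/matrixP=> i j; rewrite !mxE conjCK. Qed.
Lemma adjD m n (A B : 'M[C]_(m,n)) : adj (A + B) = adj A + adj B.
Proof. by apply/matrixP=> i j; rewrite !mxE rmorphD. Qed.
Lemma adjN m n (A : 'M[C]_(m,n)) : adj (- A) = - adj A.
Proof. by apply/matrixP=> i j; rewrite !mxE rmorphN. Qed.
Lemma adjB m n (A B : 'M[C]_(m,n)) : adj (A - B) = adj A - adj B.
Proof. by rewrite adjD adjN. Qed.
Lemma adjZ m n a (A : 'M[C]_(m,n)) : adj (a *: A) = a^* *: adj A.
Proof. by apply/matrixP=> i j; rewrite !mxE rmorphM. Qed.
Lemma adj1 n : adj (1%:M : 'M[C]_n) = 1%:M.
Proof. by rewrite /adj map_mx1 trmx1. Qed.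
Lemma adjE m n (A : 'M[C]_(m,n)) : adj A = map_mx Num.conj (A^T).
Proof. by rewrite /adj map_trmx. Qed.
End S.
Section S2.
Variable R : realType.
Local Notation C := R[i].
Lemma herm_spectral n (A : 'M[C]_n) : adj A = A ->
  exists P (d : 'rV[C]_n), [/\ P *m adj P = 1%:M, adj P *m P = 1%:M,
    A = adj P *m diag_mx d *m P & forall i, d 0 i \is Num.real].
Proof.
move=> hA.
have nA : A \is normalmx by apply/normalmxP; rewrite -adjE hA.
have := orthomx_spectralP nA.
set P := spectralmx A; set d := spectral_diag A => eA.
have PP : P *m adj P = 1%:M by rewrite adjE; apply/unitarymxP/spectral_unitarymx.
have PP' : adj P *m P = 1%:M by apply: mulmx1C.
have iP : invmx P = adj P by rewrite -[LHS]mulmx1 -PP mulKmx ?spectral_unit.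
rewrite iP in eA.
exists P, d; split => // i.
have eD : diag_mx d = P *m A *m adj P.
  by rewrite eA !mulmxA PP mul1mx -mulmxA PP mulmx1.
have : adj (diag_mx d) = diag_mx d by rewrite eD !adjM adjK hA mulmxA.
move/matrixP=> /(_ i i); rewrite !mxE eqxx /= mulr1n => h.
by rewrite CrealE; apply/eqP.
Qed.
End S2.
Section S3.
Variable R : realType.
Local Notation C := R[i].
Lemma tr_spec n (A B P : 'M[C]_n) (d : 'rV[C]_n) :
  A = adj P *m diag_mx d *m P ->
  \tr (A *m B) = \sum_i d 0 i * (P *m B *m adj P) i i.
Proof.
move=> ->; rewrite -!mulmxA mxtrace_mulC -!mulmxA mul_diag_mx /mxtrace.
by apply: eq_bigr => i _; rewrite mxE !mulmxA.
Qed.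

Lemma psd_diag_conj n (B P : 'M[C]_n) i : psd B -> 0 <= (P *m B *m adj P) i i.
Proof.
case=> _ /(_ (adj (row i P))); rewrite adjK.
suff -> : (row i P *m B *m adj (row i P)) 0 0 = (P *m B *m adj P) i i by [].
rewrite /row !mxE; apply: eq_bigr => k _; rewrite !mxE.
by congr (_ * _); apply: eq_bigr => l _; rewrite !mxE.
Qed.

Lemma psd_eigen_ge0 n (A P : 'M[C]_n) d i : psd A -> P *m adj P = 1%:M ->
  A = adj P *m diag_mx d *m P -> 0 <= d 0 i.
Proof.
move=> hA PP eA.
have : diag_mx d = P *m A *m adj P by rewrite eA !mulmxA PP mul1mx -mulmxA PP mulmx1.
move/matrixP=> /(_ i i); rewrite [diag_mx _ _ _]mxE eqxx mulr1n => ->.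
exact: psd_diag_conj.
Qed.

Lemma psd_tr_ge0 n (A B : 'M[C]_n) : psd A -> psd B -> 0 <= \tr (A *m B).
Proof.
move=> hA hB; have [P [d [PP PP' eA _]]] := herm_spectral (proj1 hA).
rewrite (tr_spec _ eA); apply: sumr_ge0 => i _; apply: mulr_ge0.
  exact: psd_eigen_ge0 hA PP eA.
exact: psd_diag_conj.
Qed.
End S3.
Section S4.
Variable R : realType.
Local Notation C := R[i].

Lemma adj_diag n (e : 'rV[C]_n) : (forall i, e 0 i \is Num.real) -> adj (diag_mx e) = diag_mx e.
Proof.
move=> he; apply/matrixP=> i j; rewrite !mxE.
by case: (eqVneq i j) => [->|ne]; rewrite ?mulr1n ?mulr0n ?rmorph0 ?conj_Creal.
Qed.

Lemma diag_form n (u : 'cV[C]_n) e :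
  (adj u *m diag_mx e *m u) 0 0 = \sum_i e 0 i * (u i 0 * (u i 0)^*).
Proof.
rewrite mul_mx_diag mxE; apply: eq_bigr => i _; rewrite !mxE.
by rewrite mulrAC mulrC [_^* * _]mulrC.
Qed.

Lemma psd_diag n (e : 'rV[C]_n) : (forall i, 0 <= e 0 i) -> psd (diag_mx e).
Proof.
move=> he; split; first by apply: adj_diag => i; apply: ger0_real.
move=> v; rewrite diag_form; apply: sumr_ge0 => i _.
by apply: mulr_ge0 => //; apply: mul_conjC_ge0.
Qed.

Lemma psd_root_unique n (M : 'M[C]_n) (e : 'rV[C]_n) :
  psd M -> (forall i, 0 <= e 0 i) ->
  M *m M = diag_mx e *m diag_mx e -> M = diag_mx e.
Proof.
move=> hM he hMM; set E := diag_mx e in hMM *.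
have hE : psd E by apply: psd_diag.
have cME : M *m E = E *m M.
  have h3 : M *m E *m E = E *m (E *m M) by rewrite -mulmxA -hMM [RHS]mulmxA -hMM mulmxA.
  apply/matrixP=> i j; move/matrixP: h3 => /(_ i j).
  rewrite /E !mul_mx_diag !mul_diag_mx !mxE => h.
  have h2 : (e 0 j - e 0 i) * (e 0 j + e 0 i) * M i j = 0.
    have -> : (e 0 j - e 0 i) * (e 0 j + e 0 i) * M i j = M i j * e 0 j * e 0 j - e 0 i * (e 0 i * M i j) by ring.
    by rewrite h subrr.
  move/eqP: h2; rewrite !mulf_eq0 => /orP[/orP[]|].
  - by rewrite subr_eq0 => /eqP ->; rewrite mulrC.
  - by rewrite paddr_eq0 // => /andP[/eqP -> /eqP ->]; rewrite mulr0 mul0r.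
  - by move/eqP ->; rewrite mulr0 mul0r.
set N := M - E.
have hN : adj N = N by rewrite /N adjB (proj1 hM) (proj1 hE).
have hz : N *m (M + E) = 0.
  by rewrite /N mulmxDr !mulmxBl hMM cME addrA subrK subrr.
have eM : M = N + E by rewrite /N subrK.
clearbody N.
have hz2 : forall j, (N *m E *m adj N) j j = 0.
  move=> j; have : ((N *m M *m adj N) + (N *m E *m adj N)) j j = 0.
    by rewrite -mulmxDl -mulmxDr hz mul0mx mxE.
  rewrite mxE.
  move/eqP; rewrite paddr_eq0 ?psd_diag_conj //.
  by case/andP=> _ /eqP.
have hNE : N *m E = 0.
  apply/matrixP=> j k; rewrite /E mul_mx_diag !mxE.
  have hterm : forall i, (N *m E) j i * adj N i j = e 0 i * (N j i * (N j i)^*).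
    by move=> i; rewrite /E mul_mx_diag !mxE; ring.
  have := hz2 j; rewrite mxE => /psumr_eq0P h.
  have {h} := h (fun i _ => ltac:(by rewrite hterm mulr_ge0 ?mul_conjC_ge0)) k isT.
  rewrite hterm.
  move/eqP; rewrite mulf_eq0 mul_conjC_eq0 => /orP[]/eqP->; rewrite ?mulr0 ?mul0r //.
have hNN : N *m N = 0.
  by move: hz; rewrite eM mulmxDr mulmxDr hNE !addr0.
apply/eqP; rewrite -subr_eq0 eM addrK; apply/eqP.
apply/matrixP=> j k; rewrite mxE.
have : (N *m adj N) j j = 0 by rewrite hN hNN mxE.
rewrite mxE => /psumr_eq0P h.
have {h} := h (fun i _ => ltac:(by rewrite /adj !mxE mul_conjC_ge0)) k isT; rewrite /adj !mxE => /eqP; rewrite mul_conjC_eq0 => /eqP.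
by []. Qed.
End S4.
Section S5.
Variable R : realType.
Local Notation C := R[i].

Lemma diag_sq_norm n (d : 'rV[C]_n) : (forall i, d 0 i \is Num.real) ->
  diag_mx (\row_i `|d 0 i|) *m diag_mx (\row_i `|d 0 i|) = diag_mx d *m diag_mx d.
Proof.
move=> hd; apply/matrixP=> i j; rewrite !mul_diag_mx !mxE.
by rewrite !mulrnAr -!expr2 real_normK.
Qed.

Lemma abs_exists n (X : 'M[C]_n) : adj X = X ->
  exists M : 'M[C]_n, psd M /\ M *m M = adj X *m X.
Proof.
move=> hX; have [P [d [PP PP' eX hd]]] := herm_spectral hX.
set E := diag_mx (\row_i `|d 0 i|).
have hE : adj E = E by apply: adj_diag => i; rewrite mxE normr_real.
exists (adj P *m E *m P); split; first split.
- by rewrite !adjM adjK hE mulmxA.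
- move=> v; have -> : adj v *m (adj P *m E *m P) *m v = adj (P *m v) *m E *m (P *m v).
    by rewrite adjM !mulmxA.
  by rewrite diag_form; apply: sumr_ge0 => i _; rewrite mxE mulr_ge0 ?mul_conjC_ge0.
- rewrite hX eX -!mulmxA !(mulmxA P (adj P)) !PP !mul1mx !mulmxA.
  by rewrite -(mulmxA (adj P) E E) -(mulmxA (adj P) (diag_mx d)) diag_sq_norm.
Qed.
End S5.
Section S6.
Variable R : realType.
Local Notation C := R[i].

Lemma key_ineq n (X Q M : 'M[C]_n) : adj X = X -> psd Q -> psd (1%:M - Q) ->
  psd M -> M *m M = adj X *m X ->
  \tr (Q *m X) <= (\tr M + `|\tr X|) / 2.
Proof.
move=> hX hQ hQ1 hM hMM.
have [P [d [PP PP' eX hd]]] := herm_spectral hX.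
set e := \row_i `|d 0 i|.
set M' := P *m M *m adj P.
have hM' : psd M'.
  split; first by rewrite /M' !adjM adjK (proj1 hM) mulmxA.
  move=> v; have -> : adj v *m M' *m v = adj (adj P *m v) *m M *m (adj P *m v).
    by rewrite /M' adjM adjK !mulmxA.
  exact: (proj2 hM).
have hM'M' : M' *m M' = diag_mx e *m diag_mx e.
  rewrite diag_sq_norm // /M' -!mulmxA !(mulmxA (adj P) P) PP' !mul1mx.
  rewrite !mulmxA -(mulmxA P M M) hMM hX eX -!mulmxA !(mulmxA P (adj P)) !PP !mul1mx ?mulmx1.
  by [].
have eM' : M' = diag_mx e by apply: psd_root_unique => // i; rewrite mxE.
have trM : \tr M = \sum_i `|d 0 i|.
  have -> : M = adj P *m M' *m P.
    by rewrite /M' -!mulmxA (mulmxA (adj P) P) !PP' mul1mx mulmx1.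
  rewrite mxtrace_mulC mulmxA PP mul1mx eM' mxtrace_diag.
  by apply: eq_bigr => i _; rewrite mxE.
have trX : \tr X = \sum_i d 0 i.
  by rewrite eX mxtrace_mulC mulmxA PP mul1mx mxtrace_diag.
rewrite mxtrace_mulC (tr_spec _ eX) trM trX.
apply: (@le_trans _ _ (\sum_i (`|d 0 i| + d 0 i) / 2)).
  apply: ler_sum => i _.
  have q0 : 0 <= (P *m Q *m adj P) i i by apply: psd_diag_conj.
  have q1 : (P *m Q *m adj P) i i <= 1.
    have := psd_diag_conj P i hQ1.
    rewrite mulmxBr mulmxBl mulmx1 PP.
    rewrite [X in 0 <= X]mxE [in X in 0 <= X]mxE.
    by rewrite eqxx [(- (_ : 'M_n)) _ _]mxE subr_ge0.
  case/orP: (real_leVge (hd i) (real0 _)) => hdi.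
    rewrite ler0_norm // addNr mul0r.
    by apply: mulr_le0_ge0.
  rewrite ger0_norm //.
  have -> : (d 0 i + d 0 i) / 2 = d 0 i by field.
  by apply: ler_piMr.
rewrite -mulr_suml big_split /=; apply: ler_wpM2r; first by rewrite invr_ge0 ler0n.
rewrite lerD2l; apply: real_ler_norm.
by apply: rpred_sum => i _; apply: hd.
Qed.
End S6.
Section S7.
Variable R : realType.
Local Notation C := R[i].

Lemma absmx_spec n (X : 'M[C]_n) : adj X = X ->
  psd (absmx X) /\ absmx X *m absmx X = adj X *m X.
Proof.
move=> hX; rewrite /absmx; case: pselect => [h|nh]; first by case: (cid h).
by exfalso; apply: nh; apply: abs_exists.
Qed.

Lemma psd1 n : psd (1%:M : 'M[C]_n).
Proof.
have -> : (1%:M : 'M[C]_n) = diag_mx (\row_i 1).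
  by apply/matrixP=> i j; rewrite !mxE.
by apply: psd_diag => i; rewrite mxE ler01.
Qed.

Lemma psd0 n : psd (0 : 'M[C]_n).
Proof.
have -> : (0 : 'M[C]_n) = diag_mx 0 by apply/matrixP=> i j; rewrite !mxE mul0rn.
by apply: psd_diag => i; rewrite mxE.
Qed.

Lemma psd_tr_ge0' n (M : 'M[C]_n) : psd M -> 0 <= \tr M.
Proof. by move=> h; rewrite -[M]mulmx1; apply: psd_tr_ge0 => //; apply: psd1. Qed.
End S7.

Lemma lb_elem (R : realType) (n : nat) (rho rhobar sigma Q : 'M[R[i]]_n)
  (lambda eps : R) :
  psd rho -> psd rhobar -> psd sigma ->
  0 < lambda -> loewner_le rhobar (lambda%:C *: sigma) ->
  0 < eps -> psd Q -> loewner_le Q 1%:M -> eps%:C <= \tr (Q *m rho) ->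
  eps <= lambda * complex.Re (\tr (Q *m sigma)) + gtd rho rhobar.
Proof.
move=> hr hrb hs hl hle he hQ hQ1 hQr.
set X := rho - rhobar.
have hX : adj X = X by rewrite /X adjB (proj1 hr) (proj1 hrb).
have [hM hMM] := absmx_spec hX.
have k := key_ineq hX hQ hQ1 hM hMM.
have trM0 := psd_tr_ge0' hM.
have hs0 : 0 <= \tr (Q *m sigma) by apply: psd_tr_ge0.
have hb : 0 <= \tr (Q *m (lambda%:C *: sigma - rhobar)) by apply: psd_tr_ge0.
have eD : (gtd rho rhobar)%:C = (\tr (absmx X) + `|\tr X|) / 2.
  rewrite /gtd /trnorm -/X.
  rewrite rmorphD !rmorphM /= !RRe_real ?ger0_real ?normr_ge0 //.
  by rewrite fmorphV rmorph_nat -mulrDl.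
rewrite -lecR rmorphD rmorphM /= RRe_real ?(ger0_real hs0) // eD.
apply: le_trans hQr _.
have -> : \tr (Q *m rho) = \tr (Q *m rhobar) + \tr (Q *m X).
  by rewrite /X mulmxBr raddfB /= addrC subrK.
apply: lerD => //.
move: hb; rewrite mulmxBr raddfB /= -scalemxAr mxtraceZ subr_ge0.
by [].
Qed.

Theorem lemmaA5 (R : realType) (n : nat) (rho rhobar sigma : 'M[R[i]]_n)
  (lambda eps : R) :
  psd rho -> psd rhobar -> psd sigma ->
  0 < lambda -> loewner_le rhobar (lambda%:C *: sigma) ->
  0 < eps -> eps%:C <= \tr rho ->
  (DH eps rho sigma <= rhs_bound lambda (gtd rho rhobar / eps))%E.
Proof.
move=> hr hrb hs hl hle he htr.
rewrite /rhs_bound; case: ifP => hx; first by rewrite leey.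
have hx' : 0 < 1 - gtd rho rhobar / eps by rewrite ltNge hx.
set c := (1 - gtd rho rhobar / eps) / lambda.
have c0 : 0 < c by rewrite divr_gt0.
set S := DH_set eps rho sigma.
have ne : nonempty S.
  exists (complex.Re (\tr (1%:M *m sigma)) / eps), 1%:M; split => //.
  - exact: psd1.
  - by rewrite /loewner_le subrr; apply: psd0.
  - by rewrite mul1mx.
have lb : lbound S c.
  move=> r [Q [hQ hQ1 hQr ->]].
  have := lb_elem hr hrb hs hl hle he hQ hQ1 hQr.
  set D := gtd rho rhobar; set s := complex.Re _ => h.
  have e0 : eps != 0 by rewrite gt_eqF.
  have l0 : lambda != 0 by rewrite gt_eqF.
  have -> : c = (eps - D) / (eps * lambda).
    by rewrite /c /D; field; rewrite l0 e0.
  have -> : s / eps = (lambda * s) / (eps * lambda) by field; rewrite l0 e0.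
  apply: ler_wpM2r; first by rewrite invr_ge0 mulr_ge0 ?ltW.
  lra.
have ti := lb_le_inf ne lb.
have t0 : 0 < inf S by apply: lt_le_trans ti.
rewrite /DH -/S (gt_eqF t0) lee_fin.
have ln2 : 0 < ln (2 : R) by apply: ln_gt0; rewrite ltr1n.
have hc : ln (1 - gtd rho rhobar / eps) - ln lambda <= ln (inf S).
  rewrite -lnV ?posrE // -lnM ?posrE ?invr_gt0 //.
  by rewrite ler_ln ?posrE // ?mulr_gt0 ?invr_gt0.
rewrite /log2 -mulNr -mulrBl; apply: ler_wpM2r; first by rewrite invr_ge0 ltW.
lra.
Qed.
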